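(* For all integers $n,k\ge1$, $$\frac{L_2(k)}{n^k}<\sum_{t=k}^\infty\frac{g_{e,2}(t)}{n^t}<\frac{U_2(k)}{n^k},$$ where $L_2(k)=\left(-\frac{24\cosh\alpha}{23}-\frac{12}{5\sqrt{k+1}}\right)24^{-k}$ and $U_2(k)=\left(-\cosh\alpha+\frac{4\sqrt2\sinh\alpha}{\alpha}\sqrt{k+1}+\frac{66}{25\sqrt{k+1}}\right)24^{-k}$.
   Context: $\alpha=\pi/6$. $(a)_m=a(a+1)\cdots(a+m-1)$ is the rising factorial ($(a)_0=1$); $\binom{x}{m}=x(x-1)\cdots(x-m+1)/m!$ for $m\ge1$, $\binom{x}{0}=1$. For $t\ge1$, $$S_2(t)=\sum_{s=0}^{t-1}(1/2-s)_{s+1}\binom{-3/2}{t-s-1}\sum_{u=0}^s\frac{(-1)^u(-s)_u}{(s+u+1)!\,(2u)!}\left(\frac{\pi^2}{36}\right)^u,\qquad g_{e,2}(t)=\frac{(-1)^{t-1}}{24^t}S_2(t).$$ *)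

(* Defs.v *)
From Stdlib Require Import Reals Arith.
From Coquelicot Require Import Coquelicot.
Open Scope R_scope.

Fixpoint fsum (n : nat) (f : nat -> R) : R :=
  match n with O => 0 | S m => fsum m f + f m end.

Fixpoint fprod (n : nat) (f : nat -> R) : R :=
  match n with O => 1 | S m => fprod m f * f m end.

Definition rising (a : R) (m : nat) : R := fprod m (fun i => a + INR i).

Definition gbinom (x : R) (m : nat) : R :=
  fprod m (fun i => x - INR i) / INR (Factorial.fact m).

Definition alpha : R := PI / 6.

Definition S2 (t : nat) : R :=
  fsum t (fun s =>
    rising (1/2 - INR s) (s + 1) * gbinom (-3/2) (t - s - 1) *
    fsum (s + 1) (fun u =>
      (-1) ^ u * rising (- INR s) u
        / (INR (Factorial.fact (s + u + 1)) * INR (Factorial.fact (2 * u)))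
        * (PI ^ 2 / 36) ^ u)).

Definition g_e2 (t : nat) : R := (-1) ^ (t - 1) / 24 ^ t * S2 t.

Definition L2 (k : nat) : R :=
  (- (24 * cosh alpha / 23) - 12 / (5 * sqrt (INR k + 1))) / 24 ^ k.

Definition U2 (k : nat) : R :=
  (- cosh alpha + 4 * sqrt 2 * sinh alpha / alpha * sqrt (INR k + 1)
     + 66 / (25 * sqrt (INR k + 1))) / 24 ^ k.

(* the tail series  sum_{t >= k} g_e2 t / n^t, reindexed t = k + j *)
Definition tail_term (n k : nat) (j : nat) : R := g_e2 (k + j) / INR n ^ (k + j).

(* Main.v *)
Require Import Defs.
From Stdlib Require Import Reals Lra Lia Psatz.
From Coquelicot Require Import Coquelicot.
Open Scope R_scope.

Lemma fsum_ext n f g : (forall i, (i < n)%nat -> f i = g i) -> fsum n f = fsum n g.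
Proof. induction n; intros H; simpl; auto. rewrite IHn by (intros; apply H; lia). rewrite H by lia. auto. Qed.

Lemma fsum_le n f g : (forall i, (i < n)%nat -> f i <= g i) -> fsum n f <= fsum n g.
Proof. induction n; intros H; simpl; [lra|]. assert (f n <= g n) by (apply H; lia).
 assert (fsum n f <= fsum n g) by (apply IHn; intros; apply H; lia). lra. Qed.

Lemma fsum_scal n c f : fsum n (fun i => c * f i) = c * fsum n f.
Proof. induction n; simpl; [ring|]. rewrite IHn. ring. Qed.

Lemma fsum_geom n q : fsum n (fun u => q ^ u) * (1 - q) = 1 - q ^ n.
Proof. induction n; simpl; [ring|]. rewrite Rmult_plus_distr_r, IHn. ring. Qed.

Lemma neg1_sq n : (-1) ^ n * (-1) ^ n = 1.
Proof. induction n; simpl; [ring|]. replace (-1 * (-1) ^ n * (-1 * (-1) ^ n)) with ((-1)^n * (-1)^n) by ring. auto. Qed.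

Lemma rising_S x m : rising x (S m) = rising x m * (x + INR m).
Proof. reflexivity. Qed.

Lemma rising_front x m : rising x (S m) = x * rising (x + 1) m.
Proof.
  induction m.
  - unfold rising; simpl. ring.
  - rewrite rising_S, IHm, rising_S, S_INR. ring.
Qed.

Definition abar (s : nat) : R := (-1) ^ s * rising (1/2 - INR s) (s + 1).
Definition bbar (m : nat) : R := (-1) ^ m * gbinom (-3/2) m.

Lemma abar_0 : abar 0 = 1/2.
Proof. unfold abar, rising; simpl. ring. Qed.

Lemma abar_S s : abar (S s) = abar s * (INR s + 1/2).
Proof.
  unfold abar. replace (S s + 1)%nat with (S (s + 1)) by lia.
  rewrite rising_front. replace (1 / 2 - INR (S s) + 1) with (1/2 - INR s) by (rewrite S_INR; ring).
  rewrite S_INR. simpl. set (r := rising _ _). set (p := (-1)^s). field.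
Qed.

Lemma bbar_0 : bbar 0 = 1.
Proof. unfold bbar, gbinom; simpl. field. Qed.

Lemma bbar_S m : bbar (S m) = bbar m * (INR m + 3/2) / (INR m + 1).
Proof.
  unfold bbar, gbinom. cbn [fprod pow]. change (Factorial.fact (S m)) with (S m * Factorial.fact m)%nat.
  rewrite mult_INR, S_INR. assert (0 < INR (Factorial.fact m)) by (apply lt_0_INR, Factorial.lt_O_fact).
  assert (0 <= INR m) by apply pos_INR. field. lra.
Qed.

Lemma abar_pos s : 0 < abar s.
Proof. induction s. rewrite abar_0; lra. rewrite abar_S. assert (0 <= INR s) by apply pos_INR. nra. Qed.

Lemma bbar_pos m : 0 < bbar m.
Proof. induction m. rewrite bbar_0; lra. rewrite bbar_S. assert (0 <= INR m) by apply pos_INR.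
  apply Rdiv_lt_0_compat; nra. Qed.

Lemma bbar_sq m : bbar m * bbar m <= 2 * INR m + 1.
Proof.
  induction m. rewrite bbar_0; simpl; lra.
  rewrite bbar_S, S_INR. assert (0 <= INR m) by apply pos_INR.
  set (b := bbar m) in *. set (x := INR m) in *.
  replace (b * (x + 3 / 2) / (x + 1) * (b * (x + 3 / 2) / (x + 1))) with ((b*b) * ((x+3/2)*(x+3/2)) / ((x+1)*(x+1))) by (field; lra).
  apply Rle_trans with ((2*x+1) * ((x + 3 / 2) * (x + 3 / 2)) / ((x + 1) * (x + 1))).
  - unfold Rdiv. apply Rmult_le_compat_r. left; apply Rinv_0_lt_compat; nra. apply Rmult_le_compat_r; nra.
  - apply Rmult_le_reg_r with ((x+1)*(x+1)). nra. unfold Rdiv. rewrite Rmult_assoc, Rinv_l by nra. nra.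
Qed.

Lemma bbar_le m : bbar m <= sqrt (2 * INR m + 1).
Proof.
  rewrite <- (sqrt_square (bbar m)) by (left; apply bbar_pos). apply sqrt_le_1_alt, bbar_sq.
Qed.

Definition e (s : nat) : R := abar s / INR (Factorial.fact (s + 1)).

Lemma e_S s : e (S s) * (2 * INR s + 4) = e s * (2 * INR s + 1).
Proof.
  unfold e. rewrite abar_S. replace (S s + 1)%nat with (S (s+1)) by lia.
  change (Factorial.fact (S (s+1))) with (S (s+1) * Factorial.fact (s+1))%nat.
  rewrite mult_INR, S_INR, plus_INR. simpl INR.
  assert (0 < INR (Factorial.fact (s+1))) by (apply lt_0_INR, Factorial.lt_O_fact).
  assert (0 <= INR s) by apply pos_INR. field. lra.
Qed.

Lemma e_sum t : fsum t e + (2 * INR t + 2) * e t = 1.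
Proof.
  induction t.
  - simpl. unfold e. rewrite abar_0. simpl. field.
  - simpl fsum. rewrite S_INR. replace ((2 * (INR t + 1) + 2) * e (S t)) with (e (S t) * (2 * INR t + 4)) by ring.
    rewrite e_S. lra.
Qed.

Lemma e_pos s : 0 < e s.
Proof. unfold e. apply Rdiv_lt_0_compat. apply abar_pos. apply lt_0_INR, Factorial.lt_O_fact. Qed.

Lemma e_sum_le t : fsum t e <= 1.
Proof. pose proof (e_sum t). pose proof (e_pos t). assert (0 <= INR t) by apply pos_INR. nra. Qed.


Definition T (s u : nat) : R := (-1) ^ u * rising (- INR s) u / INR (Factorial.fact (s + u + 1)).

Lemma fact_pos n : 0 < INR (Factorial.fact n).
Proof. apply lt_0_INR, Factorial.lt_O_fact. Qed.

Lemma T_S s u : T s (S u) = T s u * (INR s - INR u) / (INR s + INR u + 2).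
Proof.
  unfold T. rewrite rising_S. replace (s + S u + 1)%nat with (S (s + u + 1)) by lia.
  change (Factorial.fact (S (s+u+1))) with (S (s+u+1) * Factorial.fact (s+u+1))%nat.
  rewrite mult_INR, S_INR, !plus_INR. simpl INR.
  pose proof (fact_pos (s+u+1)). assert (0 <= INR s) by apply pos_INR. assert (0 <= INR u) by apply pos_INR.
  change ((-1)^(S u)) with (-1 * (-1)^u).
  set (r := rising _ _). set (p := (-1)^u). clearbody r p. field. split; lra.
Qed.

Lemma T_bound s u : (u <= s)%nat -> 0 <= T s u <= / INR (Factorial.fact (s + 1)).
Proof.
  induction u; intros H.
  - unfold T, rising; simpl. replace (s + 0 + 1)%nat with (s+1)%nat by lia.
    pose proof (fact_pos (s+1)). replace (1*1/INR (Factorial.fact (s+1))) with (/ INR (Factorial.fact (s+1))) by (field; lra).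
    split; [left; apply Rinv_0_lt_compat; auto | lra].
  - destruct IHu as [H1 H2]; [lia|]. rewrite T_S.
    assert (INR u + 1 <= INR s) by (rewrite <- S_INR; apply le_INR; lia).
    assert (0 <= INR u) by apply pos_INR.
    assert (0 <= (INR s - INR u) / (INR s + INR u + 2) <= 1).
    { split. apply Rdiv_le_0_compat; lra. apply Rmult_le_reg_r with (INR s + INR u + 2). lra.
      unfold Rdiv. rewrite Rmult_assoc, Rinv_l by lra. lra. }
    unfold Rdiv in *. rewrite Rmult_assoc. split. apply Rmult_le_pos; lra.
    apply Rle_trans with (T s u * 1). apply Rmult_le_compat_l; lra. lra.
Qed.

Definition cs (s : nat) : R :=
    fsum (s + 1) (fun u =>
      (-1) ^ u * rising (- INR s) u
        / (INR (Factorial.fact (s + u + 1)) * INR (Factorial.fact (2 * u)))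
        * (PI ^ 2 / 36) ^ u).

Lemma x_bound : 0 <= PI ^ 2 / 36 <= 4/9.
Proof. pose proof PI_4. pose proof PI_RGT_0. split. apply Rdiv_le_0_compat; [nra|lra]. simpl. nra. Qed.

Lemma cs_bound s : 0 <= cs s <= 9/5 / INR (Factorial.fact (s + 1)).
Proof.
  pose proof x_bound as [X1 X2]. pose proof (fact_pos (s+1)).
  assert (Hterm : forall u, (u < s + 1)%nat ->
     0 <= (-1) ^ u * rising (- INR s) u
        / (INR (Factorial.fact (s + u + 1)) * INR (Factorial.fact (2 * u)))
        * (PI ^ 2 / 36) ^ u <= / INR (Factorial.fact (s + 1)) * (4/9) ^ u).
  { intros u Hu. destruct (T_bound s u) as [T1 T2]; [lia|].
    assert (F2 : 1 <= INR (Factorial.fact (2*u))).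
    { pose proof (Factorial.lt_O_fact (2*u)). apply (le_INR 1). lia. }
    pose proof (fact_pos (s+u+1)).
    replace ((-1) ^ u * rising (- INR s) u / (INR (Factorial.fact (s + u + 1)) * INR (Factorial.fact (2 * u))))
      with (T s u / INR (Factorial.fact (2*u))) by (unfold T; field; lra).
    assert (0 <= (PI ^ 2 / 36) ^ u <= (4/9)^u) by (split; [apply pow_le; lra | apply pow_incr; lra]).
    assert (0 <= T s u / INR (Factorial.fact (2 * u)) <= T s u).
    { split. apply Rdiv_le_0_compat; lra. unfold Rdiv. rewrite <- (Rmult_1_r (T s u)) at 2.
      apply Rmult_le_compat_l. lra. rewrite <- Rinv_1. apply Rinv_le_contravar; lra. }
    split. apply Rmult_le_pos; lra.
    apply Rmult_le_compat; lra. }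
  unfold cs. split.
  - apply Rle_trans with (fsum (s+1) (fun _ => 0)).
    + clear. induction (s+1)%nat; simpl; lra.
    + apply fsum_le. intros; apply Hterm; auto.
  - eapply Rle_trans. apply fsum_le. intros; apply Hterm; auto.
    rewrite fsum_scal. pose proof (fsum_geom (s+1) (4/9)).
    assert (0 <= (4/9)^(s+1)) by (apply pow_le; lra).
    assert (fsum (s+1) (fun u => (4/9)^u) <= 9/5) by lra.
    unfold Rdiv. rewrite Rmult_comm. apply Rmult_le_compat_r. left; apply Rinv_0_lt_compat; auto. auto.
Qed.


Definition P (t : nat) : R := fsum t (fun s => abar s * bbar (t - s - 1) * cs s).

Lemma g_e2_eq t : g_e2 t = P t / 24 ^ t.
Proof.
  unfold g_e2. replace ((-1) ^ (t - 1) / 24 ^ t * S2 t) with (((-1) ^ (t - 1) * S2 t) / 24 ^ t)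
    by (unfold Rdiv; ring).
  f_equal. unfold S2, P. rewrite <- fsum_scal. apply fsum_ext. intros i Hi.
  replace (t - 1)%nat with (i + (t - i - 1))%nat by lia. rewrite pow_add.
  unfold abar, bbar. fold (cs i).
  set (p1 := (-1)^i). set (p2 := (-1)^(t-i-1)). set (a := rising _ _). set (b := gbinom _ _).
  clearbody p1 p2 a b. ring.
Qed.

Lemma P_nonneg t : 0 <= P t.
Proof.
  unfold P. apply Rle_trans with (fsum t (fun _ => 0)).
  - clear. induction t; simpl; lra.
  - apply fsum_le. intros i _. pose proof (abar_pos i). pose proof (bbar_pos (t-i-1)).
    pose proof (cs_bound i). apply Rmult_le_pos; [|lra]. nra.
Qed.

Lemma P_le t : P t <= 9/5 * sqrt (2 * INR t).
Proof.
  unfold P. eapply Rle_trans.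
  - apply fsum_le with (g := fun s => 9/5 * sqrt (2 * INR t) * e s). intros i Hi.
    pose proof (abar_pos i). pose proof (bbar_pos (t-i-1)). pose proof (cs_bound i) as [C1 C2].
    assert (Hb : bbar (t - i - 1) <= sqrt (2 * INR t)).
    { eapply Rle_trans. apply bbar_le. apply sqrt_le_1_alt.
      assert (INR (2 * (t - i - 1) + 1) <= INR (2 * t)) by (apply le_INR; lia).
      rewrite plus_INR, !mult_INR in H1. simpl in H1. lra. }
    unfold e. pose proof (fact_pos (i+1)).
    replace (9 / 5 * sqrt (2 * INR t) * (abar i / INR (Factorial.fact (i + 1))))
      with (abar i * sqrt (2 * INR t) * (9/5 / INR (Factorial.fact (i + 1)))) by (field; lra).
    assert (0 <= 9/5 / INR (Factorial.fact (i + 1))) by (apply Rdiv_le_0_compat; lra).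
    apply Rmult_le_compat; [nra | lra | apply Rmult_le_compat_l; lra | lra].
  - rewrite (fsum_scal t (9/5*sqrt(2*INR t)) e). pose proof (e_sum_le t). assert (0 <= sqrt (2 * INR t)) by apply sqrt_pos. nra.
Qed.


Lemma alpha_bounds : 0 < alpha <= 2/3.
Proof. unfold alpha. pose proof PI_4. pose proof PI_RGT_0. lra. Qed.

Lemma cosh_alpha : 0 < cosh alpha <= 2.
Proof.
  unfold cosh. pose proof alpha_bounds. pose proof exp_le_3.
  assert (exp alpha <= exp 1) by (destruct (Req_dec alpha 1) as [->|]; [lra| left; apply exp_increasing; lra]).
  pose proof (exp_pos alpha). pose proof (exp_pos (-alpha)).
  assert (exp (- alpha) <= 1) by (rewrite <- exp_0; left; apply exp_increasing; lra). lra.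
Qed.

Lemma sinh_alpha : 4/5 <= sinh alpha / alpha.
Proof.
  pose proof alpha_bounds as [A1 A2]. unfold sinh. rewrite exp_Ropp.
  pose proof (exp_ineq1 alpha ltac:(lra)). set (y := exp alpha) in *.
  assert (/ y <= / (1 + alpha)) by (apply Rinv_le_contravar; lra).
  assert (/ (1 + alpha) * (1 + alpha) = 1) by (field; lra).
  apply Rmult_le_reg_r with alpha; auto.
  replace ((y - / y) / 2 / alpha * alpha) with ((y - /y)/2) by (field; lra).
  set (w := / (1 + alpha)) in *.
  assert (8/5 * alpha <= 1 + alpha - w).
  { apply Rmult_le_reg_r with (1+alpha). lra. nra. }
  lra.
Qed.

Lemma pow2_ge j : INR j + 1 <= 2 ^ j.
Proof. induction j; [simpl; lra|]. rewrite S_INR. cbn [pow]. pose proof (pow_R1_Rle 2 j ltac:(lra)). lra. Qed.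

Lemma sqrt_tail k j : sqrt (2 * INR (k + j)) <= sqrt (2 * (INR k + 1)) * 2 ^ j.
Proof.
  assert (0 <= 2^j) by (apply pow_le; lra).
  rewrite <- (sqrt_square (2^j)) by auto.
  rewrite <- sqrt_mult by (try apply Rmult_le_pos; pose proof (pos_INR k); lra).
  apply sqrt_le_1_alt. rewrite plus_INR. pose proof (pow2_ge j). pose proof (pos_INR k). pose proof (pos_INR j). set (p := 2^j) in *. assert (p <= p*p) by nra. assert (INR j + 1 <= p * p) by lra.
  nra.
Qed.


Lemma tail_bound n k j : (1 <= n)%nat ->
  0 <= tail_term n k j <=
  (9/5 * sqrt (2 * (INR k + 1)) / (24 ^ k * INR n ^ k)) * (/12) ^ j.
Proof.
  intros Hn. unfold tail_term. rewrite g_e2_eq.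
  assert (HN : 1 <= INR n) by (apply (le_INR 1); auto).
  assert (Nk : 1 <= INR n ^ k) by (apply pow_R1_Rle; auto).
  assert (Nj : 1 <= INR n ^ j) by (apply pow_R1_Rle; auto).
  assert (Tk : 1 <= 24 ^ k) by (apply pow_R1_Rle; lra).
  assert (Tj : 1 <= 24 ^ j) by (apply pow_R1_Rle; lra).
  assert (E12 : (/12)^j * 24^j = 2^j) by (rewrite <- Rpow_mult_distr; f_equal; lra).
  pose proof (P_nonneg (k+j)) as P0.
  pose proof (P_le (k+j)) as P1. pose proof (sqrt_tail k j) as S1.
  set (W := sqrt (2 * (INR k + 1))) in *.
  rewrite !pow_add.
  set (A := P (k+j)) in *. set (a := 24^k) in *. set (b := 24^j) in *.
  set (c := INR n ^ k) in *. set (d := INR n ^ j) in *. set (q := (/12)^j) in *.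
  assert (HA : A <= 9/5 * (W * 2^j)).
  { eapply Rle_trans. apply P1. apply Rmult_le_compat_l; lra. }
  clearbody A a b c d q W.
  replace (A / (a * b) / (c * d)) with (A / (a*b*c*d))  by (field; repeat split; apply Rgt_not_eq; lra).
  assert (0 < a*b*c*d) by (repeat apply Rmult_lt_0_compat; lra).
  split. apply Rdiv_le_0_compat; [auto| lra].
  assert (0 < a*c) by (repeat apply Rmult_lt_0_compat; lra). assert (0 < a*b*c) by (repeat apply Rmult_lt_0_compat; lra).
  apply Rle_trans with (A / (a*b*c)).
  - unfold Rdiv. apply Rmult_le_compat_l; auto. apply Rinv_le_contravar; nra.
  - replace (9 / 5 * W / (a * c) * q) with (9/5 * (W * 2^j) / (a*b*c)).
    + unfold Rdiv. apply Rmult_le_compat_r; [left; apply Rinv_0_lt_compat; auto| auto].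
    + rewrite <- E12. field. repeat split; apply Rgt_not_eq; lra.
Qed.

Theorem mainTheorem17 (n k : nat) (hn : (1 <= n)%nat) (hk : (1 <= k)%nat) :
  ex_series (tail_term n k) /\
  L2 k / INR n ^ k < Series (tail_term n k) /\
  Series (tail_term n k) < U2 k / INR n ^ k.
Proof.
  assert (HN : 1 <= INR n) by (apply (le_INR 1); auto).
  assert (Nk : 1 <= INR n ^ k) by (apply pow_R1_Rle; auto).
  assert (Tk : 1 <= 24 ^ k) by (apply pow_R1_Rle; lra).
  assert (HB : forall j, 0 <= tail_term n k j <=
     (9/5 * sqrt (2 * (INR k + 1)) / (24 ^ k * INR n ^ k)) * (/12)^j) by (intro j; apply tail_bound; auto).
  set (W := sqrt (2 * (INR k + 1))) in *.
  set (K := 9/5 * W / (24 ^ k * INR n ^ k)) in *.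
  assert (HG : is_series (fun j => K * (/12)^j) (K * / (1 - /12))).
  { apply (is_series_scal_l K (fun j => (/12)^j)). apply is_series_geom. rewrite Rabs_pos_eq; lra. }
  assert (HGe : ex_series (fun j => K * (/12)^j)) by (exists (K * / (1 - /12)); auto).
  assert (Hex : ex_series (tail_term n k)).
  { apply (@ex_series_le R_AbsRing R_CompleteNormedModule _ (fun j => K * (/12)^j)); auto. intro j. destruct (HB j).
    change (Rabs (tail_term n k j) <= K * (/12)^j). rewrite Rabs_pos_eq; lra. }
  assert (Hup : Series (tail_term n k) <= K * / (1 - /12)).
  { rewrite <- (is_series_unique _ _ HG). apply Series_le; auto. }
  assert (Hlo : 0 <= Series (tail_term n k)).
  { replace 0 with (Series (fun j => 0 * (/12)^j)).
    apply Series_le; auto. intro j; destruct (HB j); rewrite Rmult_0_l; lra.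
    rewrite Series_scal_l; ring. }
  split; [auto|]. split.
  - apply Rlt_le_trans with 0; auto. unfold L2.
    pose proof cosh_alpha. assert (0 < sqrt (INR k + 1)) by (apply sqrt_lt_R0; pose proof (pos_INR k); lra).
    assert (0 < 12 / (5 * sqrt (INR k + 1))) by (apply Rdiv_lt_0_compat; lra).
    assert (0 < 24 ^ k * INR n ^ k) by (apply Rmult_lt_0_compat; lra).
    replace ((- (24 * cosh alpha / 23) - 12 / (5 * sqrt (INR k + 1))) / 24 ^ k / INR n ^ k)
      with ((- (24 * cosh alpha / 23) - 12 / (5 * sqrt (INR k + 1))) / (24 ^ k * INR n ^ k))
      by (field; repeat split; apply Rgt_not_eq; lra).
    assert (0 < / (24 ^ k * INR n ^ k)) by (apply Rinv_0_lt_compat; lra).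
    set (X := (- (24 * cosh alpha / 23) - 12 / (5 * sqrt (INR k + 1)))).
    assert (X < 0) by (unfold X; lra). unfold Rdiv at 1. nra.
  - eapply Rle_lt_trans. apply Hup. unfold U2, K.
    set (Q := sqrt (INR k + 1)).
    assert (HW : W = sqrt 2 * Q) by (unfold W, Q; apply sqrt_mult; pose proof (pos_INR k); lra).
    assert (HW2 : 2 <= W).
    { unfold W. rewrite <- (sqrt_square 2) at 1 by lra. apply sqrt_le_1_alt. assert (1 <= INR k) by (apply (le_INR 1); auto). lra. }
    assert (HQ : 0 < Q) by (apply sqrt_lt_R0; pose proof (pos_INR k); lra).
    pose proof cosh_alpha. pose proof sinh_alpha. pose proof alpha_bounds.
    assert (0 < 24 ^ k * INR n ^ k) by (apply Rmult_lt_0_compat; lra).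
    assert (E : 4 * sqrt 2 * sinh alpha / alpha * Q = 4 * (sinh alpha / alpha) * W) by (rewrite HW; field; lra).
    rewrite E. set (D := 24 ^ k * INR n ^ k) in *.
    replace ((- cosh alpha + 4 * (sinh alpha / alpha) * W + 66 / (25 * Q)) / 24 ^ k / INR n ^ k)
      with ((- cosh alpha + 4 * (sinh alpha / alpha) * W + 66 / (25 * Q)) / D)
      by (unfold D; field; repeat split; apply Rgt_not_eq; lra).
    replace (9 / 5 * W / D * / (1 - / 12)) with ((108/55 * W) / D) by (field; apply Rgt_not_eq; lra).
    unfold Rdiv. apply Rmult_lt_compat_r. apply Rinv_0_lt_compat; lra.
    assert (0 < 66 * / (25 * Q)) by (apply Rmult_lt_0_compat; [lra| apply Rinv_0_lt_compat; lra]).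
    set (sr := sinh alpha / alpha) in *. nra.
Qed.
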